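(* Let $f:\mathbb{R}^n\to\mathbb{R}^n$ be locally Lipschitz with $f(0)=0$ and suppose there exists a convex Lyapunov function $V\in C^1(\mathbb{R}^n;\mathbb{R}^+)$ for $\dot z=f(z)$. Let $\bar\varphi:\mathbb{R}^n\to(0,+\infty)$ be continuous such that for every $x\in\mathbb{R}^n$ and $h\in[0,\bar\varphi(x)]$ the equation $Y=x+hf(Y)$ has a unique solution $Y\in\mathbb{R}^n$. Then for each $r>0$, $0\in\mathbb{R}^n$ is URGAS for the hybrid system (2.2) with $\varphi(x):=\min\{\bar\varphi(x),r\}$ and $F(h,x):=f(Y)$, where $Y$ is the solution of $Y=x+hf(Y)$ (implicit Euler method).
   Context: The hybrid system (2.2): for each locally bounded $u:\mathbb{R}^+\to\mathbb{R}^+$ and $x_0$, $\tau_0=0$, $x(0)=x_0$, $h_i=\varphi(x(\tau_i))\exp(-u(\tau_i))$, $\tau_{i+1}=\tau_i+h_i$, $x(t)=x(\tau_i)+(t-\tau_i)F(h_i,x(\tau_i))$ on $[\tau_i,\tau_{i+1}]$; solution $x(t,x_0;u)$. URGAS: (a) for every $\varepsilon>0$ there is $\delta>0$ with $|x_0|<\delta\Rightarrow|x(t,x_0;u)|<\varepsilon$ for all $t\ge0$ and all $u$; (b) for every $R$, $\sup\{|x(t,x_0;u)|:t\ge0,|x_0|\le R,u\}<\infty$; (c) for all $\varepsilon,R$ there is $T$ with $|x(t,x_0;u)|\le\varepsilon$ for $t\ge T$, $|x_0|\le R$, all locally bounded $u\ge0$. A Lyapunov function for $\dot z=f(z)$ is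 a positive definite, radially unbounded $C^1$ function $V$ with $\nabla V(x)f(x)<0$ for $x\ne0$. *)

(* Defs.v *)
From Stdlib Require Import Reals Lra.
From Stdlib Require Fin.
Open Scope R_scope.

Definition vec (n : nat) := Fin.t n -> R.

Fixpoint fsum (n : nat) : (Fin.t n -> R) -> R :=
  match n with
  | O => fun _ => 0
  | S m => fun u => u Fin.F1 + fsum m (fun i => u (Fin.FS i))
  end.

Definition vzero {n} : vec n := fun _ => 0.
Definition vadd {n} (x y : vec n) : vec n := fun i => x i + y i.
Definition vsub {n} (x y : vec n) : vec n := fun i => x i - y i.
Definition vscale {n} (a : R) (x : vec n) : vec n := fun i => a * x i.
Definition dot {n} (x y : vec n) : R := fsum n (fun i => x i * y i).
Definition vnorm {n} (x : vec n) : R := sqrt (dot x x).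

Definition locally_lipschitz {n} (f : vec n -> vec n) : Prop :=
  forall x, exists delta L, 0 < delta /\
    forall y z, vnorm (vsub y x) < delta -> vnorm (vsub z x) < delta ->
      vnorm (vsub (f y) (f z)) <= L * vnorm (vsub y z).

Definition continuous_vec_R {n} (g : vec n -> R) : Prop :=
  forall x eps, 0 < eps -> exists delta, 0 < delta /\
    forall y, vnorm (vsub y x) < delta -> Rabs (g y - g x) < eps.

Definition continuous_vec_vec {n} (g : vec n -> vec n) : Prop :=
  forall x eps, 0 < eps -> exists delta, 0 < delta /\
    forall y, vnorm (vsub y x) < delta -> vnorm (vsub (g y) (g x)) < eps.

Definition has_gradient {n} (V : vec n -> R) (gV : vec n -> vec n) : Prop :=
  forall x eps, 0 < eps -> exists delta, 0 < delta /\
    forall h, vnorm h < delta ->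
      Rabs (V (vadd x h) - V x - dot (gV x) h) <= eps * vnorm h.

Definition C1_with_gradient {n} (V : vec n -> R) (gV : vec n -> vec n) : Prop :=
  has_gradient V gV /\ continuous_vec_vec gV.

Definition lyapunov_function {n} (f : vec n -> vec n) (V : vec n -> R) : Prop :=
  (forall x, 0 <= V x) /\
  V vzero = 0 /\ (forall x, x <> vzero -> 0 < V x) /\
  (forall M, exists Rr, forall x, Rr <= vnorm x -> M <= V x) /\
  exists gV, C1_with_gradient V gV /\
    forall x, x <> vzero -> dot (gV x) (f x) < 0.

Definition convex_fun {n} (V : vec n -> R) : Prop :=
  forall x y lam, 0 <= lam <= 1 ->
    V (vadd (vscale lam x) (vscale (1 - lam) y)) <= lam * V x + (1 - lam) * V y.

(* Hybrid system (2.2): nodes (x(tau_i), tau_i). *)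
Fixpoint node {n} (phi : vec n -> R) (F : R -> vec n -> vec n) (u : R -> R)
  (x0 : vec n) (i : nat) : vec n * R :=
  match i with
  | O => (x0, 0)
  | S k => let (x, tau) := node phi F u x0 k in
           let h := phi x * exp (- u tau) in
           (vadd x (vscale h (F h x)), tau + h)
  end.

(* sol_at phi F u x0 t y : the solution x(t, x0; u) of (2.2) is defined at
   time t and equals y, i.e. t lies in some [tau_i, tau_{i+1}] and
   y = x(tau_i) + (t - tau_i) F(h_i, x(tau_i)). *)
Definition sol_at {n} (phi : vec n -> R) (F : R -> vec n -> vec n) (u : R -> R)
  (x0 : vec n) (t : R) (y : vec n) : Prop :=
  exists i, let (x, tau) := node phi F u x0 i in
    let h := phi x * exp (- u tau) in
    tau <= t <= tau + h /\ y = vadd x (vscale (t - tau) (F h x)).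

Definition admissible_input (u : R -> R) : Prop :=
  (forall t, 0 <= t -> 0 <= u t) /\
  (forall T, 0 <= T -> exists M, forall t, 0 <= t <= T -> u t <= M).

Definition URGAS {n} (phi : vec n -> R) (F : R -> vec n -> vec n) : Prop :=
  (forall eps, 0 < eps -> exists delta, 0 < delta /\
     forall x0 u t y, admissible_input u -> vnorm x0 < delta -> 0 <= t ->
       sol_at phi F u x0 t y -> vnorm y < eps) /\
  (forall Rr, exists M, forall x0 u t y, admissible_input u -> vnorm x0 <= Rr ->
       0 <= t -> sol_at phi F u x0 t y -> vnorm y <= M) /\
  (forall eps Rr, 0 < eps -> exists T, forall x0 u t y, admissible_input u ->
       vnorm x0 <= Rr -> T <= t -> sol_at phi F u x0 t y -> vnorm y <= eps).

(* Main.v *)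
Require Import Defs.
From Stdlib Require Import Reals Lra Lia Psatz Classical FunctionalExtensionality ClassicalEpsilon.
Open Scope R_scope.

Lemma fsum_ext n (u v : Fin.t n -> R) : (forall i, u i = v i) -> fsum n u = fsum n v.
Proof. intros H. f_equal. apply functional_extensionality. exact H. Qed.

Lemma fsum_add n (u v : Fin.t n -> R) : fsum n (fun i => u i + v i) = fsum n u + fsum n v.
Proof. induction n; simpl. lra. rewrite (IHn (fun i => u (Fin.FS i)) (fun i => v (Fin.FS i))). lra. Qed.

Lemma fsum_scal n a (u : Fin.t n -> R) : fsum n (fun i => a * u i) = a * fsum n u.
Proof. induction n; simpl. lra. rewrite (IHn (fun i => u (Fin.FS i))). lra. Qed.

Lemma fsum_zero n : fsum n (fun _ => 0) = 0.
Proof. induction n; simpl. lra. rewrite IHn. lra. Qed.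

Lemma fsum_nonneg n (u : Fin.t n -> R) : (forall i, 0 <= u i) -> 0 <= fsum n u.
Proof. induction n; simpl; intros H. lra. specialize (IHn (fun i => u (Fin.FS i))).
  assert (0 <= u Fin.F1) by apply H. assert (0 <= fsum n (fun i => u (Fin.FS i))) by (apply IHn; intros; apply H). lra. Qed.

Lemma fsum_le_term n (j : Fin.t n) : forall (u : Fin.t n -> R), (forall i, 0 <= u i) -> u j <= fsum n u.
Proof. induction j as [m|m j IH]; intros u H; simpl.
 - assert (0 <= fsum m (fun i => u (Fin.FS i))) by (apply fsum_nonneg; intros; apply H). lra.
 - assert (0 <= u Fin.F1) by apply H. specialize (IH (fun i => u (Fin.FS i))). simpl in IH.
   assert (u (Fin.FS j) <= fsum m (fun i => u (Fin.FS i))) by (apply IH; intros; apply H). lra. Qed.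

Lemma dot_comm n (a b : vec n) : dot a b = dot b a.
Proof. unfold dot. apply fsum_ext. intros; ring. Qed.

Lemma dot_nonneg n (a : vec n) : 0 <= dot a a.
Proof. unfold dot. apply fsum_nonneg. intros; nra. Qed.

Lemma dot_add_r n (a b c : vec n) : dot a (vadd b c) = dot a b + dot a c.
Proof. unfold dot, vadd. rewrite <- fsum_add. apply fsum_ext. intros; ring. Qed.

Lemma dot_add_l n (a b c : vec n) : dot (vadd b c) a = dot b a + dot c a.
Proof. rewrite dot_comm, dot_add_r, (dot_comm _ a b), (dot_comm _ a c). ring. Qed.

Lemma dot_scale_r n s (a b : vec n) : dot a (vscale s b) = s * dot a b.
Proof. unfold dot, vscale. rewrite <- fsum_scal. apply fsum_ext. intros; ring. Qed.

Lemma dot_scale_l n s (a b : vec n) : dot (vscale s b) a = s * dot b a.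
Proof. rewrite dot_comm, dot_scale_r, dot_comm. ring. Qed.

Lemma dot_zero_r n (a : vec n) : dot a vzero = 0.
Proof. unfold dot, vzero. transitivity (fsum n (fun _ => 0)). apply fsum_ext. intros; ring. apply fsum_zero. Qed.

Lemma dot_sub_r n (a b c : vec n) : dot a (vsub b c) = dot a b - dot a c.
Proof. unfold dot, vsub. replace (fsum n (fun i => a i * b i) - fsum n (fun i => a i * c i)) with
  (fsum n (fun i => a i * b i) + (-1) * fsum n (fun i => a i * c i)) by ring.
  rewrite <- (fsum_scal n (-1)). rewrite <- fsum_add. apply fsum_ext. intros; ring. Qed.

Lemma dot_sub_l n (a b c : vec n) : dot (vsub b c) a = dot b a - dot c a.
Proof. rewrite dot_comm, dot_sub_r, (dot_comm _ a b), (dot_comm _ a c). ring. Qed.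

Lemma cs_sq n (a b : vec n) : dot a b * dot a b <= dot a a * dot b b.
Proof. induction n; unfold dot; simpl. lra.
  specialize (IHn (fun i => a (Fin.FS i)) (fun i => b (Fin.FS i))). unfold dot in IHn.
  set (s := fsum n (fun i => a (Fin.FS i) * b (Fin.FS i))) in *.
  set (A := fsum n (fun i => a (Fin.FS i) * a (Fin.FS i))) in *.
  set (B := fsum n (fun i => b (Fin.FS i) * b (Fin.FS i))) in *.
  assert (HA : 0 <= A) by (apply fsum_nonneg; intros; nra).
  assert (HB : 0 <= B) by (apply fsum_nonneg; intros; nra).
  set (a1 := a Fin.F1). set (b1 := b Fin.F1).
  set (p := a1*a1*B + A*b1*b1). set (q := 2*a1*b1*s).
  assert (Hp : 0 <= p) by (unfold p; nra).
  assert (Hpq : q*q <= p*p).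
  { unfold p, q. assert (0 <= (a1*a1*B - A*b1*b1)*(a1*a1*B - A*b1*b1)) by apply (Rle_0_sqr (a1*a1*B - A*b1*b1)).
    assert (0 <= (a1*b1)*(a1*b1)*(A*B - s*s)) by (apply Rmult_le_pos; [apply (Rle_0_sqr (a1*b1)) | lra]). nra. }
  assert (q <= p) by nra. unfold p, q in *. nra. Qed.

Lemma abs_le_of_sq x y : 0 <= y -> x * x <= y * y -> Rabs x <= y.
Proof. intros Hy H. destruct (Rle_or_lt (Rabs x) y) as [h|h]; auto.
  assert (Rabs x * Rabs x = x * x) by (rewrite <- Rabs_mult; apply Rabs_right; nra).
  nra. Qed.

Lemma sqrt_le_of x y : 0 <= y -> x <= y * y -> sqrt x <= y.
Proof. intros Hy H. rewrite <- (sqrt_square y Hy). apply sqrt_le_1_alt. exact H. Qed.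

Lemma vnorm_nonneg n (a : vec n) : 0 <= vnorm a.
Proof. apply sqrt_pos. Qed.

Lemma vnorm_sq n (a : vec n) : vnorm a * vnorm a = dot a a.
Proof. apply sqrt_sqrt. apply dot_nonneg. Qed.

Lemma cs n (a b : vec n) : Rabs (dot a b) <= vnorm a * vnorm b.
Proof. apply abs_le_of_sq. apply Rmult_le_pos; apply vnorm_nonneg.
  replace (vnorm a * vnorm b * (vnorm a * vnorm b)) with ((vnorm a * vnorm a) * (vnorm b * vnorm b)) by ring.
  rewrite !vnorm_sq. apply cs_sq. Qed.

Lemma coord_le n (a : vec n) i : Rabs (a i) <= vnorm a.
Proof. apply abs_le_of_sq. apply vnorm_nonneg. rewrite vnorm_sq. unfold dot.
  apply (fsum_le_term n i (fun i => a i * a i)). intros; nra. Qed.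

Lemma vnorm_scale n s (a : vec n) : vnorm (vscale s a) = Rabs s * vnorm a.
Proof. unfold vnorm. rewrite dot_scale_l, dot_scale_r.
  replace (s * (s * dot a a)) with ((s*s) * dot a a) by ring.
  rewrite sqrt_mult by (nra || apply dot_nonneg). rewrite <- (sqrt_Rsqr_abs s). reflexivity. Qed.

Lemma vnorm_zero n : vnorm (@vzero n) = 0.
Proof. unfold vnorm. rewrite dot_zero_r. apply sqrt_0. Qed.

Lemma vnorm_add n (a b : vec n) : vnorm (vadd a b) <= vnorm a + vnorm b.
Proof. apply sqrt_le_of. pose proof (vnorm_nonneg n a); pose proof (vnorm_nonneg n b); lra.
  rewrite dot_add_l, !dot_add_r. rewrite (dot_comm _ b a).
  pose proof (cs n a b). pose proof (Rle_abs (dot a b)).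
  pose proof (vnorm_sq n a). pose proof (vnorm_sq n b). nra. Qed.

Lemma vsub_sym n (a b : vec n) : vnorm (vsub a b) = vnorm (vsub b a).
Proof. replace (vsub b a) with (vscale (-1) (vsub a b)).
  rewrite vnorm_scale. replace (Rabs (-1)) with 1 by (rewrite Rabs_left; lra). ring.
  apply functional_extensionality; intros i; unfold vscale, vsub; ring. Qed.

Lemma vnorm_rev n (a b : vec n) : Rabs (vnorm a - vnorm b) <= vnorm (vsub a b).
Proof. assert (E1 : a = vadd (vsub a b) b) by (apply functional_extensionality; intros i; unfold vadd, vsub; ring).
  assert (E2 : b = vadd (vsub b a) a) by (apply functional_extensionality; intros i; unfold vadd, vsub; ring).
  pose proof (vnorm_add n (vsub a b) b). pose proof (vnorm_add n (vsub b a) a).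
  rewrite <- E1 in H. rewrite <- E2 in H0. rewrite (vsub_sym n b a) in H0.
  apply Rabs_le. lra. Qed.

Lemma vnorm_cons m (z : vec (S m)) : vnorm z <= Rabs (z Fin.F1) + vnorm (fun i => z (Fin.FS i)).
Proof. apply sqrt_le_of. pose proof (Rabs_pos (z Fin.F1)). pose proof (vnorm_nonneg m (fun i => z (Fin.FS i))). lra.
  pose proof (vnorm_sq m (fun i => z (Fin.FS i))). unfold dot in H at 1 |- *. simpl.
  pose proof (Rabs_pos (z Fin.F1)). pose proof (vnorm_nonneg m (fun i => z (Fin.FS i))).
  assert (Rabs (z Fin.F1) * Rabs (z Fin.F1) = z Fin.F1 * z Fin.F1) by (rewrite <- Rabs_mult; apply Rabs_right; nra).
  nra. Qed.


Lemma inv_small eps : 0 < eps -> exists N, forall j, (N <= j)%nat -> / INR (S j) < eps.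
Proof. intros He. destruct (INR_unbounded (/eps)) as [N HN]. exists N. intros j Hj.
  assert (INR N <= INR j) by (apply le_INR; exact Hj).
  rewrite S_INR. assert (0 <= INR N) by apply pos_INR.
  rewrite <- (Rinv_inv eps). apply Rinv_lt_contravar.
  apply Rmult_lt_0_compat. apply Rinv_0_lt_compat; lra. lra. lra. Qed.

Fixpoint mkseq (g : nat -> nat -> nat) (j : nat) : nat :=
  match j with O => g O O | S j' => g (S (mkseq g j')) (S j') end.

Definition strict_incr (phi : nat -> nat) := forall j, (phi j < phi (S j))%nat.

Lemma strict_incr_ge phi : strict_incr phi -> forall j, (j <= phi j)%nat.
Proof. intros H j; induction j. lia. specialize (H j). lia. Qed.

Lemma strict_incr_mono phi : strict_incr phi -> forall i j, (i <= j)%nat -> (phi i <= phi j)%nat.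
Proof. intros H i j Hij; induction Hij. lia. specialize (H m). lia. Qed.

Lemma bw_R (u : nat -> R) K : (forall k, Rabs (u k) <= K) ->
  exists phi l, strict_incr phi /\ (forall eps, 0 < eps -> exists N, forall j, (N <= j)%nat -> Rabs (u (phi j) - l) < eps).
Proof. intros Hu.
  destruct (Bolzano_Weierstrass u (fun c => -K <= c <= K) (compact_P3 (-K) K)) as [l Hl].
  { intros k. specialize (Hu k). pose proof (Rle_abs (u k)); pose proof (Rle_abs (- u k)); rewrite Rabs_Ropp in *; lra. }
  assert (pick : forall N j, exists p, (N <= p)%nat /\ Rabs (u p - l) < / INR (S j)).
  { intros N j. assert (Hp : 0 < / INR (S j)) by (apply Rinv_0_lt_compat; apply lt_0_INR; lia).
    destruct (Hl (disc l (mkposreal _ Hp)) N) as [p Hp2].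
    exists (mkposreal _ Hp). intros y Hy; exact Hy.
    exists p. exact Hp2. }
  set (g := fun N j => proj1_sig (constructive_indefinite_description _ (pick N j))).
  assert (Hg : forall N j, (N <= g N j)%nat /\ Rabs (u (g N j) - l) < / INR (S j)).
  { intros N j. unfold g. destruct (constructive_indefinite_description _ (pick N j)) as [p Hp]. exact Hp. }
  exists (mkseq g), l. split.
  - intros j. simpl. destruct (Hg (S (mkseq g j)) (S j)). lia.
  - intros eps He. destruct (inv_small eps He) as [N HN]. exists N. intros j Hj.
    specialize (HN j Hj). destruct j; simpl.
    + destruct (Hg 0%nat 0%nat). lra.
    + destruct (Hg (S (mkseq g j)) (S j)). lra. Qed.

Lemma bw_vec n : forall (z : nat -> vec n) K, (forall k i, Rabs (z k i) <= K) ->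
  exists phi zs, strict_incr phi /\ (forall eps, 0 < eps -> exists N, forall j, (N <= j)%nat -> vnorm (vsub (z (phi j)) zs) < eps).
Proof. induction n as [|m IH]; intros z K Hz.
  - exists (fun j => j), vzero. split. intros j; lia. intros eps He. exists O. intros j _.
    unfold vnorm, dot. simpl. rewrite sqrt_0. exact He.
  - destruct (bw_R (fun k => z k Fin.F1) K) as [phi1 [a [Hp1 Ha]]]. intros k; apply Hz.
    destruct (IH (fun k => fun i => z (phi1 k) (Fin.FS i)) K) as [phi2 [w [Hp2 Hw]]]. intros k i; apply Hz.
    exists (fun j => phi1 (phi2 j)), (fun i => Fin.caseS' i (fun _ => R) a w). split.
    + intros j. pose proof (strict_incr_mono phi1 Hp1 (S (phi2 j)) (phi2 (S j)) (Hp2 j)). pose proof (Hp1 (phi2 j)). lia.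
    + intros eps He. destruct (Ha (eps/2)) as [N1 HN1]. lra. destruct (Hw (eps/2)) as [N2 HN2]. lra.
      exists (Nat.max N1 N2). intros j Hj.
      eapply Rle_lt_trans. apply vnorm_cons.
      specialize (HN2 j ltac:(lia)). specialize (HN1 (phi2 j)).
      assert (phi2 j >= j)%nat by (apply strict_incr_ge; exact Hp2).
      specialize (HN1 ltac:(lia)). unfold vsub at 1. simpl.
      assert (E : (fun i => vsub (z (phi1 (phi2 j))) (fun i0 : Fin.t (S m) => Fin.caseS' i0 (fun _ => R) a w) (Fin.FS i))
         = vsub (fun i => z (phi1 (phi2 j)) (Fin.FS i)) w) by reflexivity.
      rewrite E. lra. Qed.

Definition bounded_set {n} (P : vec n -> Prop) := exists K, forall z, P z -> vnorm z <= K.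
Definition closed_set_v {n} (P : vec n -> Prop) :=
  forall zs, (forall d, 0 < d -> exists z, P z /\ vnorm (vsub z zs) < d) -> P zs.

Lemma cluster n (P : vec n -> Prop) (g : vec n -> R) (z : nat -> vec n) :
  bounded_set P -> closed_set_v P -> continuous_vec_R g -> (forall k, P (z k)) ->
  exists zs, P zs /\ forall eps, 0 < eps -> forall N, exists k, (N <= k)%nat /\ Rabs (g (z k) - g zs) < eps.
Proof. intros [K HK] Hc Hg Hz.
  destruct (bw_vec n z K) as [phi [zs [Hphi Hconv]]].
  { intros k i. eapply Rle_trans. apply coord_le. apply HK, Hz. }
  exists zs. split.
  - apply Hc. intros d Hd. destruct (Hconv d Hd) as [N HN]. exists (z (phi N)). split. apply Hz. apply HN. lia.
  - intros eps He N. destruct (Hg zs eps He) as [dl [Hdl H]]. destruct (Hconv dl Hdl) as [N' HN'].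
    exists (phi (Nat.max N N')). split.
    + pose proof (strict_incr_ge phi Hphi (Nat.max N N')). lia.
    + apply H. apply HN'. lia. Qed.

Lemma pos_lb n (P : vec n -> Prop) (g : vec n -> R) :
  bounded_set P -> closed_set_v P -> continuous_vec_R g -> (forall z, P z -> 0 < g z) ->
  exists c, 0 < c /\ forall z, P z -> c <= g z.
Proof. intros Hb Hc Hg Hpos. apply NNPP. intros Hn.
  assert (Hk : forall k, exists z, P z /\ g z < / INR (S k)).
  { intros k. apply NNPP. intros Hn2. apply Hn. exists (/ INR (S k)). split.
    apply Rinv_0_lt_compat; apply lt_0_INR; lia.
    intros z Sz. apply Rnot_lt_le. intros Hlt. apply Hn2. exists z. auto. }
  set (zk := fun k => proj1_sig (constructive_indefinite_description _ (Hk k))).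
  assert (Hzk : forall k, P (zk k) /\ g (zk k) < / INR (S k)).
  { intros k. unfold zk. destruct (constructive_indefinite_description _ (Hk k)) as [p Hp]. exact Hp. }
  destruct (cluster n P g zk Hb Hc Hg) as [zs [Szs Hcl]]. intros k; apply Hzk.
  pose proof (Hpos zs Szs) as Hgz.
  destruct (inv_small (g zs / 2)) as [N HN]. lra.
  destruct (Hcl (g zs / 2) ltac:(lra) N) as [k [Hk1 Hk2]].
  specialize (HN k Hk1). destruct (Hzk k) as [_ H2]. apply Rabs_def2 in Hk2. lra. Qed.

Lemma ub_lemma n (P : vec n -> Prop) (g : vec n -> R) :
  bounded_set P -> closed_set_v P -> continuous_vec_R g ->
  exists M, forall z, P z -> g z <= M.
Proof. intros Hb Hc Hg. apply NNPP. intros Hn.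
  assert (Hk : forall k, exists z, P z /\ INR k < g z).
  { intros k. apply NNPP. intros Hn2. apply Hn. exists (INR k).
    intros z Sz. apply Rnot_lt_le. intros Hlt. apply Hn2. exists z. auto. }
  set (zk := fun k => proj1_sig (constructive_indefinite_description _ (Hk k))).
  assert (Hzk : forall k, P (zk k) /\ INR k < g (zk k)).
  { intros k. unfold zk. destruct (constructive_indefinite_description _ (Hk k)) as [p Hp]. exact Hp. }
  destruct (cluster n P g zk Hb Hc Hg) as [zs [Szs Hcl]]. intros k; apply Hzk.
  destruct (INR_unbounded (g zs + 1)) as [N HN].
  destruct (Hcl 1 ltac:(lra) N) as [k [Hk1 Hk2]].
  assert (INR N <= INR k) by (apply le_INR; exact Hk1).
  destruct (Hzk k) as [_ H2]. apply Rabs_def2 in Hk2. lra. Qed.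

Lemma vadd_vsub n (x y : vec n) : vadd x (vsub y x) = y.
Proof. apply functional_extensionality; intros i; unfold vadd, vsub; ring. Qed.

Lemma grad_cont n (V : vec n -> R) gV : has_gradient V gV -> continuous_vec_R V.
Proof. intros Hg x eps He. destruct (Hg x 1 Rlt_0_1) as [d1 [Hd1 H1]].
  set (G := vnorm (gV x)). assert (HG : 0 <= G) by apply vnorm_nonneg.
  exists (Rmin d1 (eps / (G + 2))). split.
  { apply Rmin_pos. lra. apply Rdiv_lt_0_compat; lra. }
  intros y Hy. pose proof (Rmin_l d1 (eps/(G+2))). pose proof (Rmin_r d1 (eps/(G+2))).
  specialize (H1 (vsub y x) ltac:(lra)). rewrite vadd_vsub in H1.
  pose proof (cs n (gV x) (vsub y x)). fold G in H2.
  set (h := vnorm (vsub y x)) in *. assert (0 <= h) by apply vnorm_nonneg.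
  assert (h * (G+2) < eps).
  { assert (h < eps / (G+2)) by lra. apply (Rmult_lt_compat_r (G+2)) in H4; [|lra].
    unfold Rdiv in H4. rewrite Rmult_assoc, Rinv_l in H4 by lra. lra. }
  apply Rabs_def1.
  - pose proof (Rle_abs (V y - V x - dot (gV x) (vsub y x))). pose proof (Rle_abs (dot (gV x) (vsub y x))). nra.
  - pose proof (Rle_abs (-(V y - V x - dot (gV x) (vsub y x)))). pose proof (Rle_abs (-dot (gV x) (vsub y x))).
    rewrite Rabs_Ropp in *. nra. Qed.

Lemma eps_arg A B C : 0 <= C -> (forall e, 0 < e -> A <= B + e * C) -> A <= B.
Proof. intros HC H. apply Rnot_lt_le. intros Hlt.
  set (e := (A - B) / (2 * (C + 1))).
  assert (He : 0 < e) by (apply Rdiv_lt_0_compat; lra).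
  assert (E : e * (C + 1) = (A - B) / 2) by (unfold e; field; lra).
  specialize (H e He). nra. Qed.

Lemma grad_ineq n (V : vec n -> R) gV : convex_fun V -> has_gradient V gV ->
  forall a b, V a + dot (gV a) (vsub b a) <= V b.
Proof. intros Hc Hg a b. set (d := vsub b a). set (D := vnorm d). assert (HD : 0 <= D) by apply vnorm_nonneg.
  cut (dot (gV a) d <= V b - V a). lra.
  apply (eps_arg _ _ D HD). intros e He.
  destruct (Hg a e He) as [dl [Hdl H]].
  set (lam := Rmin 1 (dl / (2 * (D + 1)))).
  assert (Hl0 : 0 < lam) by (apply Rmin_pos; [lra| apply Rdiv_lt_0_compat; lra]).
  assert (Hl1 : lam <= 1) by apply Rmin_l.
  assert (Hl2 : lam * D < dl).
  { assert (lam <= dl / (2*(D+1))) by apply Rmin_r.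
    assert (lam * (D+1) <= dl/2).
    { apply (Rmult_le_compat_r (D+1)) in H0; [|lra]. unfold Rdiv in H0.
      rewrite Rinv_mult in H0. replace (dl * (/2 * /(D+1)) * (D+1)) with (dl/2 * (/(D+1) * (D+1))) in H0 by (unfold Rdiv; ring).
      rewrite Rinv_l in H0 by lra. lra. }
    nra. }
  specialize (H (vscale lam d)). rewrite vnorm_scale, Rabs_right in H by lra. fold D in H.
  specialize (H Hl2).
  assert (E : vadd a (vscale lam d) = vadd (vscale lam b) (vscale (1 - lam) a)).
  { apply functional_extensionality; intros i; unfold vadd, vscale, d, vsub; ring. }
  rewrite E in H. pose proof (Hc b a lam ltac:(lra)).
  rewrite dot_scale_r in H.
  pose proof (Rle_abs (- (V (vadd (vscale lam b) (vscale (1 - lam) a)) - V a - lam * dot (gV a) d))).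
  rewrite Rabs_Ropp in H1.
  apply (Rmult_le_reg_l lam). lra. nra. Qed.

Lemma vsub_self n (x : vec n) : vsub x x = vzero.
Proof. apply functional_extensionality; intros i; unfold vsub, vzero; ring. Qed.

Lemma lip_cont n (f : vec n -> vec n) : locally_lipschitz f -> continuous_vec_vec f.
Proof. intros Hf x eps He. destruct (Hf x) as [d [L [Hd H]]].
  exists (Rmin d (eps / (Rabs L + 1))). split.
  { apply Rmin_pos. lra. apply Rdiv_lt_0_compat. lra. pose proof (Rabs_pos L); lra. }
  intros y Hy. pose proof (Rmin_l d (eps / (Rabs L + 1))). pose proof (Rmin_r d (eps / (Rabs L + 1))).
  specialize (H y x ltac:(lra)). rewrite vsub_self, vnorm_zero in H. specialize (H Hd).
  pose proof (Rle_abs L). pose proof (Rabs_pos L). set (h := vnorm (vsub y x)) in *.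
  assert (0 <= h) by apply vnorm_nonneg.
  assert (h * (Rabs L + 1) < eps).
  { assert (Hq : h < eps / (Rabs L + 1)) by lra. apply (Rmult_lt_compat_r (Rabs L + 1)) in Hq; [|lra].
    unfold Rdiv in Hq. rewrite Rmult_assoc, Rinv_l in Hq by lra. lra. }
  nra. Qed.

Lemma dot_cont n (a b : vec n -> vec n) : continuous_vec_vec a -> continuous_vec_vec b ->
  continuous_vec_R (fun z => - dot (a z) (b z)).
Proof. intros Ha Hb x eps He.
  set (A := vnorm (a x)). set (B := vnorm (b x)).
  assert (HA : 0 <= A) by apply vnorm_nonneg. assert (HB : 0 <= B) by apply vnorm_nonneg.
  set (eta := Rmin 1 (eps / (A + B + 2))).
  assert (Heta : 0 < eta) by (apply Rmin_pos; [lra| apply Rdiv_lt_0_compat; lra]).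
  assert (Heta1 : eta <= 1) by apply Rmin_l.
  assert (Heta2 : eta * (A + B + 1) < eps).
  { assert (eta <= eps / (A+B+2)) by apply Rmin_r.
    assert (eta * (A+B+2) <= eps).
    { apply (Rmult_le_compat_r (A+B+2)) in H; [|lra]. unfold Rdiv in H.
      rewrite Rmult_assoc, Rinv_l in H by lra. lra. }
    nra. }
  destruct (Ha x eta Heta) as [da [Hda Ha']]. destruct (Hb x eta Heta) as [db [Hdb Hb']].
  exists (Rmin da db). split. apply Rmin_pos; lra.
  intros y Hy. pose proof (Rmin_l da db). pose proof (Rmin_r da db).
  specialize (Ha' y ltac:(lra)). specialize (Hb' y ltac:(lra)).
  assert (E : - dot (a y) (b y) - - dot (a x) (b x) = - (dot (vsub (a y) (a x)) (b y) + dot (a x) (vsub (b y) (b x)))).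
  { rewrite dot_sub_l, dot_sub_r. ring. }
  rewrite E, Rabs_Ropp.
  assert (Hby : vnorm (b y) <= B + eta).
  { pose proof (vnorm_rev n (b y) (b x)). pose proof (Rle_abs (vnorm (b y) - vnorm (b x))). unfold B. lra. }
  eapply Rle_lt_trans. apply Rabs_triang.
  pose proof (cs n (vsub (a y) (a x)) (b y)). pose proof (cs n (a x) (vsub (b y) (b x))). fold A in H2.
  pose proof (vnorm_nonneg n (vsub (a y) (a x))). pose proof (vnorm_nonneg n (vsub (b y) (b x))).
  pose proof (vnorm_nonneg n (b y)).
  assert (vnorm (vsub (a y) (a x)) * vnorm (b y) <= eta * (B + eta)).
  { apply Rmult_le_compat; lra. }
  assert (A * vnorm (vsub (b y) (b x)) <= A * eta) by (apply Rmult_le_compat_l; lra).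
  nra. Qed.

Lemma le_of_all_d a b : (forall d, 0 < d -> a < b + d) -> a <= b.
Proof. intros H. apply Rnot_lt_le. intros Hlt. specialize (H ((a - b)/2) ltac:(lra)). lra. Qed.

Lemma exp_neg_le1 x : 0 <= x -> exp (- x) <= 1.
Proof. intros Hx. rewrite <- exp_0. destruct Hx as [Hx|Hx].
  left. apply exp_increasing. lra. subst. rewrite Ropp_0. lra. Qed.

Lemma node_S n phi (F : R -> vec n -> vec n) u x0 i :
  node phi F u x0 (S i) =
  (vadd (fst (node phi F u x0 i)) (vscale (phi (fst (node phi F u x0 i)) * exp (- u (snd (node phi F u x0 i))))
     (F (phi (fst (node phi F u x0 i)) * exp (- u (snd (node phi F u x0 i)))) (fst (node phi F u x0 i)))),
   snd (node phi F u x0 i) + phi (fst (node phi F u x0 i)) * exp (- u (snd (node phi F u x0 i)))).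
Proof. simpl. destruct (node phi F u x0 i). reflexivity. Qed.

Theorem theorem4p15 (n : nat) (f : vec n -> vec n) (V : vec n -> R)
  (phibar : vec n -> R) :
  locally_lipschitz f ->
  f vzero = vzero ->
  lyapunov_function f V ->
  convex_fun V ->
  continuous_vec_R phibar ->
  (forall x, 0 < phibar x) ->
  (forall x h, 0 <= h <= phibar x ->
     exists Y, Y = vadd x (vscale h (f Y)) /\
       forall Y', Y' = vadd x (vscale h (f Y')) -> Y' = Y) ->
  forall (r : R), 0 < r ->
  forall (F : R -> vec n -> vec n),
    (forall x h, 0 <= h <= Rmin (phibar x) r ->
       exists Y, Y = vadd x (vscale h (f Y)) /\ F h x = f Y) ->
    URGAS (fun x => Rmin (phibar x) r) F.
Proof.
  intros Hlip Hf0 [HV0 [HVz [HVpos [HVrad [gV [[Hgrad HgVc] HgVf]]]]]] Hconv _ Hphib _ r Hr F HF.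
  set (phi := fun x => Rmin (phibar x) r).
  set (c := fun z => - dot (gV z) (f z)).
  assert (Hc0 : forall z, 0 <= c z).
  { intros z. unfold c. destruct (classic (z = vzero)) as [->|Hz].
    rewrite Hf0, dot_zero_r. lra. specialize (HgVf z Hz). lra. }
  assert (HVc : continuous_vec_R V) by (eapply grad_cont; exact Hgrad).
  assert (Hcc : continuous_vec_R c) by (apply dot_cont; [exact HgVc | apply lip_cont; exact Hlip]).
  assert (Hstep : forall x h Y, 0 < h -> Y = vadd x (vscale h (f Y)) -> V Y <= V x - h * c Y).
  { intros x h Y Hh HY. pose proof (grad_ineq n V gV Hconv Hgrad Y x).
    assert (E : vsub x Y = vscale (-h) (f Y)).
    { apply functional_extensionality; intros i. pose proof (f_equal (fun v => v i) HY) as Hi.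
      simpl in Hi. unfold vadd, vscale in Hi. unfold vsub, vscale. lra. }
    rewrite E, dot_scale_r in H. unfold c. lra. }
  assert (Hinterp : forall x h Y s, 0 < h -> 0 <= s <= h -> Y = vadd x (vscale h (f Y)) ->
            V (vadd x (vscale s (f Y))) <= V x).
  { intros x h Y s Hh Hs HY. set (lam := s / h).
    assert (Hl : 0 <= lam <= 1).
    { unfold lam. split. apply Rmult_le_pos. lra. left; apply Rinv_0_lt_compat; lra.
      apply (Rmult_le_reg_r h). lra. unfold Rdiv. rewrite Rmult_assoc, Rinv_l by lra. lra. }
    assert (E : vadd x (vscale s (f Y)) = vadd (vscale lam Y) (vscale (1 - lam) x)).
    { apply functional_extensionality; intros i. pose proof (f_equal (fun v => v i) HY) as Hi.
      simpl in Hi. unfold vadd, vscale in Hi |- *. rewrite Hi. unfold lam. field. lra. }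
    rewrite E. pose proof (Hconv Y x lam Hl). pose proof (Hstep x h Y Hh HY). pose proof (Hc0 Y).
    assert (h * c Y >= 0) by nra. nra. }
  assert (Hdyn : forall u x0, admissible_input u ->
     (forall i, 0 <= snd (node phi F u x0 i)) /\
     (forall i, 0 < phi (fst (node phi F u x0 i)) * exp (- u (snd (node phi F u x0 i))) <= r) /\
     (forall i, V (fst (node phi F u x0 (S i))) <= V (fst (node phi F u x0 i))
          - phi (fst (node phi F u x0 i)) * exp (- u (snd (node phi F u x0 i))) * c (fst (node phi F u x0 (S i)))) /\
     (forall t y, sol_at phi F u x0 t y -> exists i, V y <= V (fst (node phi F u x0 i)) /\
          snd (node phi F u x0 i) <= t <= snd (node phi F u x0 i) + phi (fst (node phi F u x0 i)) * exp (- u (snd (node phi F u x0 i))))).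
  { intros u x0 [Hu0 _].
    assert (Hpos : forall x tau, 0 <= tau -> 0 < phi x * exp (- u tau) <= r /\ phi x * exp (- u tau) <= phi x).
    { intros x tau Ht. assert (0 < phi x) by (unfold phi; apply Rmin_pos; [apply Hphib | lra]).
      assert (phi x <= r) by (unfold phi; apply Rmin_r).
      pose proof (exp_pos (- u tau)). pose proof (exp_neg_le1 (u tau) (Hu0 tau Ht)).
      repeat split; nra. }
    assert (HT : forall i, 0 <= snd (node phi F u x0 i)).
    { induction i. simpl; lra. rewrite node_S. simpl. pose proof (Hpos (fst (node phi F u x0 i)) _ IHi). lra. }
    assert (Hsn : forall i, exists Y, F (phi (fst (node phi F u x0 i)) * exp (- u (snd (node phi F u x0 i)))) (fst (node phi F u x0 i)) = f Y
       /\ Y = vadd (fst (node phi F u x0 i)) (vscale (phi (fst (node phi F u x0 i)) * exp (- u (snd (node phi F u x0 i)))) (f Y))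
       /\ fst (node phi F u x0 (S i)) = Y).
    { intros i. destruct (Hpos (fst (node phi F u x0 i)) _ (HT i)) as [[Hh1 Hh2] Hh3].
      destruct (HF (fst (node phi F u x0 i)) (phi (fst (node phi F u x0 i)) * exp (- u (snd (node phi F u x0 i))))) as [Y [HY HFY]].
      { split. lra. exact Hh3. }
      exists Y. split. exact HFY. split. exact HY. rewrite node_S. simpl. rewrite HFY. rewrite <- HY. reflexivity. }
    split. exact HT. split. intros i. apply (Hpos (fst (node phi F u x0 i)) _ (HT i)).
    split.
    - intros i. destruct (Hsn i) as [Y [_ [HY E]]]. rewrite E. apply Hstep. apply (Hpos (fst (node phi F u x0 i)) _ (HT i)). exact HY.
    - intros t y [i Hi]. exists i. pose proof (Hsn i) as Hs. pose proof (Hpos (fst (node phi F u x0 i)) _ (HT i)) as Hp. revert Hi Hs Hp.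
      destruct (node phi F u x0 i) as [x tau] eqn:E. simpl. intros [Ht Hy] [Y [HFY [HY _]]] [[Hh1 Hh2] _].
      split; [| exact Ht]. rewrite Hy, HFY. apply (Hinterp x _ Y (t - tau) Hh1). lra. exact HY. }
  assert (Hmono : forall u x0, admissible_input u -> forall i j, (i <= j)%nat ->
     V (fst (node phi F u x0 j)) <= V (fst (node phi F u x0 i))).
  { intros u x0 Hu i j Hij. destruct (Hdyn u x0 Hu) as [_ [Hh [Hd _]]].
    induction Hij. lra. specialize (Hd m). specialize (Hh m). pose proof (Hc0 (fst (node phi F u x0 (S m)))). nra. }
  assert (Hsol : forall u x0 t y, admissible_input u -> sol_at phi F u x0 t y -> V y <= V x0).
  { intros u x0 t y Hu Hs. destruct (Hdyn u x0 Hu) as [_ [_ [_ Hs2]]]. destruct (Hs2 t y Hs) as [i [Hi _]].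
    pose proof (Hmono u x0 Hu 0%nat i ltac:(lia)). simpl in H. lra. }
  assert (L1 : forall eps, 0 < eps -> exists m, 0 < m /\ forall z, eps <= vnorm z -> m <= V z).
  { intros eps He. destruct (HVrad 1) as [Rr HRr].
    destruct (pos_lb n (fun z => eps <= vnorm z /\ vnorm z <= Rr) V) as [c1 [Hc1 Hc1']].
    - exists Rr. intros z [_ Hz]. exact Hz.
    - intros zs Hzs. split; apply le_of_all_d; intros d Hd; destruct (Hzs d Hd) as [z [[Hz1 Hz2] Hz3]];
        pose proof (vnorm_rev n z zs); pose proof (Rle_abs (vnorm z - vnorm zs)); pose proof (Rle_abs (-(vnorm z - vnorm zs)));
        rewrite Rabs_Ropp in *; lra.
    - exact HVc.
    - intros z [Hz1 _]. apply HVpos. intros ->. rewrite vnorm_zero in Hz1. lra.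
    - exists (Rmin c1 1). split. apply Rmin_pos; lra. intros z Hz.
      destruct (Rle_or_lt (vnorm z) Rr).
      + pose proof (Rmin_l c1 1). pose proof (Hc1' z (conj Hz H)). lra.
      + pose proof (Rmin_r c1 1). pose proof (HRr z ltac:(lra)). lra. }
  assert (L2 : forall R0, exists B, forall z, vnorm z <= R0 -> V z <= B).
  { intros R0. apply (ub_lemma n (fun z => vnorm z <= R0) V).
    - exists R0. auto.
    - intros zs Hzs. apply le_of_all_d; intros d Hd; destruct (Hzs d Hd) as [z [Hz1 Hz3]];
        pose proof (vnorm_rev n z zs); pose proof (Rle_abs (vnorm z - vnorm zs)); pose proof (Rle_abs (-(vnorm z - vnorm zs)));
        rewrite Rabs_Ropp in *; lra.
    - exact HVc. }
  assert (L3 : forall m B, 0 < m -> exists c0, 0 < c0 /\ forall z, m <= V z <= B -> c0 <= c z).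
  { intros m B Hm. destruct (HVrad (B + 1)) as [R1 HR1].
    apply (pos_lb n (fun z => m <= V z <= B) c).
    - exists R1. intros z Hz. destruct (Rle_or_lt (vnorm z) R1). lra. pose proof (HR1 z ltac:(lra)). lra.
    - intros zs Hzs. split; apply le_of_all_d; intros d Hd; destruct (HVc zs d Hd) as [dl [Hdl Hc]];
        destruct (Hzs dl Hdl) as [z [Hz1 Hz3]]; specialize (Hc z Hz3); apply Rabs_def2 in Hc; lra.
    - exact Hcc.
    - intros z Hz. unfold c. assert (z <> vzero) by (intros ->; lra). specialize (HgVf z H). lra. }
  split; [|split].
  - intros eps He. destruct (L1 eps He) as [m [Hm Hm']].
    destruct (HVc vzero m Hm) as [d [Hd Hd']]. exists d. split. exact Hd.
    intros x0 u t y Hu Hx0 _ Hs. rewrite HVz in Hd'.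
    assert (vsub x0 vzero = x0) by (apply functional_extensionality; intros i; unfold vsub, vzero; ring).
    specialize (Hd' x0 ltac:(rewrite H; exact Hx0)). apply Rabs_def2 in Hd'.
    pose proof (Hsol u x0 t y Hu Hs). apply Rnot_le_lt. intros Hc. pose proof (Hm' y Hc). lra.
  - intros R0. destruct (L2 R0) as [B HB]. destruct (HVrad (B + 1)) as [R1 HR1]. exists R1.
    intros x0 u t y Hu Hx0 _ Hs. pose proof (Hsol u x0 t y Hu Hs). pose proof (HB x0 Hx0).
    apply Rnot_lt_le. intros Hc. pose proof (HR1 y ltac:(lra)). lra.
  - intros eps R0 He. destruct (L1 eps He) as [m [Hm Hm']]. destruct (L2 R0) as [B HB].
    destruct (L3 m B Hm) as [c0 [Hc0p Hc0']].
    exists (B / c0 + r). intros x0 u t y Hu Hx0 Ht Hs.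
    destruct (Hdyn u x0 Hu) as [HT [Hh [Hd Hs2]]].
    assert (HP : forall i, m <= V (fst (node phi F u x0 i)) ->
       V (fst (node phi F u x0 i)) <= V x0 - snd (node phi F u x0 i) * c0).
    { induction i.
      - simpl. lra.
      - intros Hmi. pose proof (Hd i) as Hdi. pose proof (Hh i) as Hhi.
        pose proof (Hc0 (fst (node phi F u x0 (S i)))).
        assert (m <= V (fst (node phi F u x0 i))) by nra.
        specialize (IHi H0).
        pose proof (Hmono u x0 Hu 0%nat (S i) ltac:(lia)). change (fst (node phi F u x0 0)) with x0 in H1.
        pose proof (HB x0 Hx0).
        pose proof (Hc0' (fst (node phi F u x0 (S i))) ltac:(split; lra)).
        assert (Hsnd : snd (node phi F u x0 (S i)) = snd (node phi F u x0 i) + phi (fst (node phi F u x0 i)) * exp (- u (snd (node phi F u x0 i))))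
          by (rewrite node_S; reflexivity).
        rewrite Hsnd. nra. }
    destruct (Hs2 t y Hs) as [i [Hyi Hti]]. specialize (Hh i).
    assert (Htau : B / c0 <= snd (node phi F u x0 i)) by lra.
    assert (V (fst (node phi F u x0 i)) < m).
    { apply Rnot_le_lt. intros Hmi. specialize (HP i Hmi). pose proof (HB x0 Hx0).
      assert (B / c0 * c0 = B) by (field; lra).
      assert (B / c0 * c0 <= snd (node phi F u x0 i) * c0) by (apply Rmult_le_compat_r; lra). lra. }
    apply Rnot_lt_le. intros Hc. pose proof (Hm' y ltac:(lra)). lra.
Qed.
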